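(* For every $\theta,\bar\theta\in\mathbb R^m$ there exists a stochastic policy $\mu_{\theta,\bar\theta}$ such that \[ T_{\alpha,\eta}(\theta)-T_{\alpha,\eta}(\bar\theta)=A^\eta_{\mu_{\theta,\bar\theta}}(\theta-\bar\theta). \] In particular, suppose $\theta^\star_\eta$ satisfies $\Phi^\top D(R+\gamma PV_{\theta^\star_\eta}-\Phi\theta^\star_\eta)-\eta\theta^\star_\eta=0$, $\theta_{k+1}=T_{\alpha,\eta}(\theta_k)$, and $x_k:=\theta_k-\theta^\star_\eta$. Then $x_{k+1}=A^\eta_{\mu_k}x_k$ for all $k\ge0$, where each $\mu_k$ is a stochastic policy depending measurably on $(\theta_k,\theta^\star_\eta)$.
   Context: Consider a finite discounted MDP with state space $\mathcal S=\{1,\dots,|\mathcal S|\}$, action space $\mathcal A=\{1,\dots,|\mathcal A|\}$, transition probabilities $P(s'\mid s,a)$, expected reward $R(s,a)$, and discount factor $\gamma\in(0,1)$. State-action vectors are ordered as $(1,1),(2,1),\dots,(|\mathcal S|,1),(1,2),\dots$. The matrix $P$ has rows $P(\cdot\mid s,a)$, and $R$ has entries $R(s,a)$. A stochastic policy is a map $\mu:\mathcal S\to\Delta_{|\mathcal A|}$. The matrix $\Pi^\mu\in\mathbb R^{|\mathcal S|\times|\mathcal S||\mathcal A|}$ has entry $\mu(a\mid s)$ at row $s$, column $(s,a)$, and zeros elsewhere. The feature matrix $\Phi\in\mathbb R^{|\mathcal S||\mathcal A|\times m}$ has full column rank and rows $\phi(s,a)^\top$. Define $V_\theta(s)=\max_a\phi(s,a)^\top\theta$.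 The distribution $d>0$ on $\mathcal S\times\mathcal A$ gives $D=\mathrm{diag}(d)$. The step size is $\alpha\in(0,1)$ and the regularization weight is $\eta\ge0$. Define $T_{\alpha,\eta}(\theta):=\theta+\alpha[\Phi^\top D(R+\gamma PV_\theta-\Phi\theta)-\eta\theta]$ and \[ A^\eta_\mu:=I-\alpha(\Phi^\top D\Phi+\eta I)+\alpha\gamma\Phi^\top DP\Pi^\mu\Phi. \] *)

(* Defs.v *)
From HB Require Import structures.
From mathcomp Require Import all_boot all_order all_algebra.
From mathcomp Require Import all_classical all_reals all_analysis.
Set Implicit Arguments. Unset Strict Implicit. Unset Printing Implicit Defensive.
Import Order.TTheory GRing.Theory Num.Theory.
Import numFieldNormedType.Exports.
Local Open Scope classical_set_scope.
Local Open Scope ring_scope.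

Section MDP.
Variables (R : realType) (nS nA m : nat).
(* States are 'I_nS, actions are 'I_nA.+1 (a nonempty action set).
   State-action pairs are indexed by 'I_(nA.+1 * nS), ordered
   (1,1),(2,1),...,(|S|,1),(1,2),... : the pair (s,a) has index a*|S| + s. *)
Definition sa (s : 'I_nS) (a : 'I_nA.+1) : 'I_(nA.+1 * nS) := mxvec_index a s.

(* P(.|s,a) are the rows of P : each row is a probability vector. *)
Definition row_stochastic (n k : nat) (M : 'M[R]_(n, k)) : Prop :=
  (forall i j, 0 <= M i j) /\ (forall i, \sum_j M i j = 1).

(* A stochastic policy mu : S -> Delta_|A|, stored as mu s a = mu(a|s). *)
Definition is_policy (mu : 'M[R]_(nS, nA.+1)) : Prop := row_stochastic mu.

Definition Pimat (mu : 'M[R]_(nS, nA.+1)) : 'M[R]_(nS, nA.+1 * nS) :=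
  \matrix_(s < nS, j < nA.+1 * nS)
     \sum_(a < nA.+1) (if j == sa s a then mu s a else 0).

Definition Vtheta (Phi : 'M[R]_(nA.+1 * nS, m)) (theta : 'cV[R]_m) : 'cV[R]_nS :=
  \col_(s < nS) \big[Num.max/(Phi *m theta) (sa s ord0) 0]_(a < nA.+1)
                   (Phi *m theta) (sa s a) 0.

Definition Dmat (d : 'cV[R]_(nA.+1 * nS)) : 'M[R]_(nA.+1 * nS) := diag_mx d^T.

Definition Gfun (Phi : 'M[R]_(nA.+1 * nS, m)) (P : 'M[R]_(nA.+1 * nS, nS))
    (Rw : 'cV[R]_(nA.+1 * nS)) (d : 'cV[R]_(nA.+1 * nS)) (gamma eta : R)
    (theta : 'cV[R]_m) : 'cV[R]_m :=
  Phi^T *m Dmat d *m (Rw + gamma *: (P *m Vtheta Phi theta) - Phi *m theta)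
  - eta *: theta.

Definition Top (Phi : 'M[R]_(nA.+1 * nS, m)) (P : 'M[R]_(nA.+1 * nS, nS))
    (Rw : 'cV[R]_(nA.+1 * nS)) (d : 'cV[R]_(nA.+1 * nS)) (gamma alpha eta : R)
    (theta : 'cV[R]_m) : 'cV[R]_m :=
  theta + alpha *: Gfun Phi P Rw d gamma eta theta.

Definition Amat (Phi : 'M[R]_(nA.+1 * nS, m)) (P : 'M[R]_(nA.+1 * nS, nS))
    (d : 'cV[R]_(nA.+1 * nS)) (gamma alpha eta : R)
    (mu : 'M[R]_(nS, nA.+1)) : 'M[R]_m :=
  1%:M - alpha *: (Phi^T *m Dmat d *m Phi + eta%:M)
  + (alpha * gamma) *: (Phi^T *m Dmat d *m P *m Pimat mu *m Phi).
End MDP.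

Definition borel_measurable_fun {T : topologicalType} {R : realType}
    (f : T -> R) : Prop :=
  forall U : set R, open U -> <<s [set V : set T | open V] >> (f @^-1` U).

(* Main.v *)
Require Import Defs.
From HB Require Import structures.
From mathcomp Require Import all_boot all_order all_algebra.
From mathcomp Require Import all_classical all_reals all_analysis.
From mathcomp Require Import measurable_realfun.
From mathcomp Require Import ring lra.
Set Implicit Arguments. Unset Strict Implicit. Unset Printing Implicit Defensive.
Import Order.TTheory GRing.Theory Num.Theory.
Import numFieldNormedType.Exports.
Local Open Scope classical_set_scope.
Local Open Scope ring_scope.

Lemma meas_inv (R : realType) : measurable_fun [set: R] (fun x : R => x^-1).
Proof.
have -> : (fun x : R => x^-1) = (fun x => if x == 0 then 0 else x^-1).
  by apply/funext => x; case: eqP => [->|]; rewrite ?invr0.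
apply: measurable_fun_if => //.
  exact: (@measurable_fun_eqr _ _ R _ id (cst 0)).
have -> : [set: R] `&` (fun x : R => x == 0) @^-1` [set false] = `]-oo, 0[ `|` `]0, +oo[.
  apply/seteqP; split => x /=.
    move=> -[_ /negbT]; rewrite neq_lt => /orP[h|h]; [left|right]; by rewrite /= in_itv /= ?h.
  case=> /=; rewrite in_itv /= ?andbT => h; split => //; by rewrite ?(lt_eqF h) ?(gt_eqF h).
apply: measurable_realfun.open_continuous_measurable_fun.
  by apply: openU; exact: interval_open.
move=> x; rewrite inE /= => h; apply: inv_continuous.
by case: h; rewrite /= in_itv /= ?andbT => h; rewrite ?(lt_eqF h) ?(gt_eqF h).
Qed.

Lemma meas_sum d (T : measurableType d) (R : realType) k (F : 'I_k -> T -> R) :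
  (forall i, measurable_fun [set: T] (F i)) ->
  measurable_fun [set: T] (fun p => \sum_(i < k) F i p).
Proof.
move=> mF.
have : forall r : seq 'I_k, measurable_fun [set: T] (fun p => \sum_(i <- r) F i p).
  elim => [|x r IH].
    have -> : (fun p => \sum_(i <- [::]) F i p) = cst 0.
      by apply/funext => p; rewrite big_nil.
    exact: measurable_cst.
  have -> : (fun p => \sum_(i <- x :: r) F i p) = F x \+ (fun p => \sum_(i <- r) F i p).
    by apply/funext => p; rewrite big_cons.
  exact: measurable_funD.
by move/(_ (index_enum _)).
Qed.

Lemma meas_forall d (T : measurableType d) k (F : 'I_k -> T -> bool) :
  (forall i, measurable_fun [set: T] (F i)) ->
  measurable_fun [set: T] (fun p => [forall i, F i p]).
Proof.
move=> mF.
have : forall r : seq 'I_k, measurable_fun [set: T] (fun p => \big[andb/true]_(i <- r) F i p).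
  elim => [|x r IH].
    have -> : (fun p => \big[andb/true]_(i <- [::]) F i p) = cst true.
      by apply/funext => p; rewrite big_nil.
    exact: measurable_cst.
  have -> : (fun p => \big[andb/true]_(i <- x :: r) F i p) = (fun p => F x p && \big[andb/true]_(i <- r) F i p).
    by apply/funext => p; rewrite big_cons.
  exact: measurable_and.
move/(_ (index_enum _)).
suff -> : (fun p => [forall i, F i p]) = (fun p => \big[andb/true]_(i <- index_enum _) F i p) by [].
apply/funext => p; rewrite big_andE.
by apply/forallP/forallP => h i; have := h i.
Qed.

Definition isArg (R : realType) n (f : 'I_n.+1 -> R) (a : 'I_n.+1) : bool :=
  [forall b, (f b <= f a) && ((b < a)%N ==> (f b < f a))].

Definition ind (R : realType) n (f : 'I_n.+1 -> R) (a : 'I_n.+1) : R :=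
  if isArg f a then 1 else 0.

Definition lamf (R : realType) n (f g : 'I_n.+1 -> R) : R :=
  \sum_i ind f i * \sum_j ind g j * ((f i - f j) / ((g j - g i) + (f i - f j))).

Definition muf (R : realType) n (f g : 'I_n.+1 -> R) (a : 'I_n.+1) : R :=
  ind f a * lamf f g + ind g a * (1 - lamf f g).


Lemma meas_isArg d (T : measurableType d) (R : realType) n (F : 'I_n.+1 -> T -> R) a :
  (forall i, measurable_fun [set: T] (F i)) ->
  measurable_fun [set: T] (fun p => isArg (fun i => F i p) a).
Proof.
move=> mF; rewrite /isArg; apply: meas_forall => b.
apply: measurable_and; first exact: measurable_fun_ler.
case: (b < a)%N => /=; first exact: measurable_fun_ltr.
exact: measurable_cst.
Qed.

Lemma meas_ind d (T : measurableType d) (R : realType) n (F : 'I_n.+1 -> T -> R) a :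
  (forall i, measurable_fun [set: T] (F i)) ->
  measurable_fun [set: T] (fun p => ind (fun i => F i p) a).
Proof.
move=> mF; rewrite /ind; apply: measurable_fun_ifT; last 2 first.
- exact: measurable_cst.
- exact: measurable_cst.
exact: meas_isArg.
Qed.

Lemma meas_lamf d (T : measurableType d) (R : realType) n (F G : 'I_n.+1 -> T -> R) :
  (forall i, measurable_fun [set: T] (F i)) ->
  (forall i, measurable_fun [set: T] (G i)) ->
  measurable_fun [set: T] (fun p => lamf (fun i => F i p) (fun i => G i p)).
Proof.
move=> mF mG; rewrite /lamf; apply: meas_sum => i.
apply: measurable_funM; first exact: meas_ind.
apply: meas_sum => j.
apply: measurable_funM; first exact: meas_ind.
apply: measurable_funM; first exact: measurable_funB.
have mD : measurable_fun [set: T] (fun p => (G j p - G i p) + (F i p - F j p)).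
  by apply: measurable_funD; apply: measurable_funB.
exact: (measurableT_comp (@meas_inv R) mD).
Qed.

Lemma meas_muf d (T : measurableType d) (R : realType) n (F G : 'I_n.+1 -> T -> R) a :
  (forall i, measurable_fun [set: T] (F i)) ->
  (forall i, measurable_fun [set: T] (G i)) ->
  measurable_fun [set: T] (fun p => muf (fun i => F i p) (fun i => G i p) a).
Proof.
move=> mF mG; rewrite /muf.
apply: measurable_funD; apply: measurable_funM; try exact: meas_ind.
  exact: meas_lamf.
apply: measurable_funB; first exact: measurable_cst.
exact: meas_lamf.
Qed.

Lemma isArg_le (R : realType) n (f : 'I_n.+1 -> R) a b : isArg f a -> f b <= f a.
Proof. by move/forallP/(_ b)/andP=> []. Qed.

Lemma isArg_uniq (R : realType) n (f : 'I_n.+1 -> R) a b :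
  isArg f a -> isArg f b -> a = b.
Proof.
move=> ha hb; apply/val_inj; case: (ltngtP a b) => // lt.
- have := (forallP hb) a; rewrite lt /= => /andP[_ h1].
  by have := isArg_le b ha; rewrite leNgt h1.
- have := (forallP ha) b; rewrite lt /= => /andP[_ h1].
  by have := isArg_le a hb; rewrite leNgt h1.
Qed.

Lemma isArg_ex (R : realType) n (f : 'I_n.+1 -> R) : exists a, isArg f a.
Proof.
have [a0 _ ha0] : exists2 a0 : 'I_n.+1, true & forall b, f b <= f a0.
  case: (@arg_maxP _ _ _ ord0 predT f erefl) => a0 _ h; exists a0 => // b.
  exact: h.
have hex : exists k, (k < n.+1)%N && (f (inord k) == f a0).
  by exists a0; rewrite ltn_ord inord_val eqxx.
case: (ex_minnP hex) => k /andP[kn /eqP fk] kmin.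
exists (inord k); apply/forallP => b; apply/andP; split.
  by rewrite fk.
apply/implyP => lt; rewrite lt_neqAle fk ha0 andbT.
apply/negP => /eqP fb.
have := kmin b; rewrite ltn_ord -fb (inord_val b) eqxx => /(_ erefl).
rewrite leqNgt; move/negP; apply; by rewrite inordK in lt.
Qed.

Lemma ind_eq (R : realType) n (f : 'I_n.+1 -> R) a b :
  isArg f a -> ind f b = (b == a)%:R.
Proof.
rewrite /ind => ha; case: ifP => hb.
  by rewrite (isArg_uniq hb ha) eqxx.
by case: eqP => // e; rewrite e ha in hb.
Qed.

Lemma sum_ind (R : realType) n (f : 'I_n.+1 -> R) a (F : 'I_n.+1 -> R) :
  isArg f a -> \sum_i ind f i * F i = F a.
Proof.
move=> ha; rewrite (bigD1 a) //= (ind_eq a ha) eqxx mul1r big1 ?addr0 //.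
by move=> i /negbTE ia; rewrite (ind_eq i ha) ia mul0r.
Qed.

Lemma lamf_eq (R : realType) n (f g : 'I_n.+1 -> R) i j :
  isArg f i -> isArg g j ->
  lamf f g = (f i - f j) / ((g j - g i) + (f i - f j)).
Proof. by move=> hi hj; rewrite /lamf (sum_ind _ hi) (sum_ind _ hj). Qed.

Lemma muf_props (R : realType) n (f g : 'I_n.+1 -> R) :
  (forall a, 0 <= muf f g a) /\ (\sum_a muf f g a = 1) /\
  (\sum_a muf f g a * (f a - g a) =
     \big[Num.max/f ord0]_a f a - \big[Num.max/g ord0]_a g a).
Proof.
have [i hi] := isArg_ex f; have [j hj] := isArg_ex g.
have hv : 0 <= f i - f j by rewrite subr_ge0 (isArg_le _ hi).
have hu : 0 <= g j - g i by rewrite subr_ge0 (isArg_le _ hj).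
set u := g j - g i in hu *; set v := f i - f j in hv *.
have hl := lamf_eq hi hj; rewrite -/u -/v in hl.
have [l0 l1] : 0 <= lamf f g /\ lamf f g <= 1.
  rewrite hl; have [z|nz] := eqVneq (u + v) 0.
    by rewrite z invr0 mulr0 lexx ler01.
  have pz : 0 < u + v by rewrite lt_def nz addr_ge0.
  split; first by rewrite divr_ge0 // addr_ge0.
  by rewrite ler_pdivrMr // mul1r lerDr.
have key : lamf f g * (u + v) = v.
  rewrite hl; have [z|nz] := eqVneq (u + v) 0.
    have v0 : v = 0 by apply/eqP; rewrite eq_le hv andbT; rewrite -z lerDr.
    by rewrite z mulr0 v0.
  by rewrite mulfVK.
have bm : forall (h : 'I_n.+1 -> R) a, isArg h a -> \big[Num.max/h ord0]_b h b = h a.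
  move=> h a ha; apply/eqP; rewrite eq_le; apply/andP; split.
    by apply: bigmax_le => [|b _]; exact: (isArg_le _ ha).
  exact: le_bigmax.
split; [|split].
- move=> a; rewrite /muf /ind.
  by apply: addr_ge0; apply: mulr_ge0; rewrite ?subr_ge0 //; case: ifP.
- rewrite /muf big_split /= -!mulr_suml.
  have s1 : forall (h : 'I_n.+1 -> R) a, isArg h a -> \sum_b ind h b = 1.
    move=> h a ha; rewrite -(@sum_ind _ _ h a (fun _ => 1)) //.
    by apply: eq_bigr => b _; rewrite mulr1.
  by rewrite (s1 _ _ hi) (s1 _ _ hj) !mul1r addrC subrK.
- rewrite (bm _ _ hi) (bm _ _ hj) /muf.
  under eq_bigr do rewrite mulrDl.
  rewrite big_split /=.
  under eq_bigr do rewrite mulrAC.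
  under [X in _ + X]eq_bigr do rewrite mulrAC.
  rewrite -!mulr_suml (sum_ind _ hi) (sum_ind _ hj).
  move: key; rewrite /u /v => key.
  set L := lamf f g in key *.
  have -> : (f i - g i) * L + (f j - g j) * (1 - L)
          = L * ((g j - g i) + (f i - f j)) + (f j - g j) by ring.
  by rewrite key; ring.
Qed.

Definition qv (R : realType) nS nA m (Phi : 'M[R]_(nA.+1 * nS, m)) (th : 'cV[R]_m)
  (s : 'I_nS) : 'I_nA.+1 -> R := fun a => (Phi *m th) (sa s a) 0.

Definition Msel (R : realType) nS nA m (Phi : 'M[R]_(nA.+1 * nS, m))
  (p : 'cV[R]_m * 'cV[R]_m) : 'M[R]_(nS, nA.+1) :=
  \matrix_(s, a) muf (qv Phi p.1 s) (qv Phi p.2 s) a.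

Lemma Msel_policy (R : realType) nS nA m (Phi : 'M[R]_(nA.+1 * nS, m)) p :
  is_policy (Msel Phi p).
Proof.
split=> [s a|s]; rewrite ?mxE.
  by have [h _] := muf_props (qv Phi p.1 s) (qv Phi p.2 s).
have [_ [h _]] := muf_props (qv Phi p.1 s) (qv Phi p.2 s).
by rewrite -h; apply: eq_bigr => a _; rewrite mxE.
Qed.

Lemma V_diff (R : realType) nS nA m (Phi : 'M[R]_(nA.+1 * nS, m)) th thb :
  Vtheta Phi th - Vtheta Phi thb
  = Pimat (Msel Phi (th, thb)) *m (Phi *m th - Phi *m thb).
Proof.
apply/matrixP => s k; rewrite (ord1 k) {k}.
have [_ [_ h]] := muf_props (qv Phi th s) (qv Phi thb s).
rewrite /qv in h.
have e : (Vtheta Phi th - Vtheta Phi thb) s 0 = Vtheta Phi th s 0 - Vtheta Phi thb s 0.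
  by rewrite [LHS]mxE [X in _ + X = _]mxE.
rewrite e /Vtheta [X in X - _ = _]mxE [X in _ - X = _]mxE -h [RHS]mxE.
under [RHS]eq_bigr do rewrite [Pimat _ _ _]mxE mulr_suml.
rewrite exchange_big /=; apply: eq_bigr => a _.
rewrite (bigD1 (sa s a)) //= eqxx big1 ?addr0.
  by rewrite [Msel _ _ _ _]mxE !mxE.
by move=> j /negbTE ->; rewrite mul0r.
Qed.

Lemma lin_id (R : realType) m (th thb A B C D E : 'cV[R]_m) (alpha gamma eta : R) :
  (th + alpha *: (A + gamma *: B - D - eta *: th))
   - (thb + alpha *: (A + gamma *: C - E - eta *: thb))
  = (th - thb) - alpha *: ((D - E) + eta *: (th - thb)) + (alpha * gamma) *: (B - C).
Proof. apply/matrixP => i j; rewrite !mxE; ring. Qed.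

Lemma Top_diff (R : realType) nS nA m (P : 'M[R]_(nA.+1 * nS, nS))
  (Rw : 'cV[R]_(nA.+1 * nS)) (gamma : R) (Phi : 'M[R]_(nA.+1 * nS, m))
  (d : 'cV[R]_(nA.+1 * nS)) (alpha eta : R) th thb mu :
  Vtheta Phi th - Vtheta Phi thb = Pimat mu *m (Phi *m th - Phi *m thb) ->
  Top Phi P Rw d gamma alpha eta th - Top Phi P Rw d gamma alpha eta thb
  = Amat Phi P d gamma alpha eta mu *m (th - thb).
Proof.
move=> hV.
set K := Phi^T *m Dmat d.
have e1 : forall t, K *m (Rw + gamma *: (P *m Vtheta Phi t) - Phi *m t)
   = K *m Rw + gamma *: (K *m (P *m Vtheta Phi t)) - K *m (Phi *m t).
  by move=> t; rewrite mulmxBr mulmxDr -!scalemxAr.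
have e2 : Amat Phi P d gamma alpha eta mu *m (th - thb)
   = (th - thb) - alpha *: ((K *m (Phi *m th) - K *m (Phi *m thb)) + eta *: (th - thb))
     + (alpha * gamma) *: (K *m (P *m Vtheta Phi th) - K *m (P *m Vtheta Phi thb)).
  rewrite /Amat.
  rewrite -/K. rewrite mulmxDl. rewrite mulmxBl. rewrite mul1mx. rewrite -!scalemxAl. rewrite mulmxDl. rewrite mul_scalar_mx.
  by rewrite -!mulmxA (mulmxBr Phi th thb) -hV !mulmxBr.
rewrite e2 /Top /Gfun -/K !e1.
exact: lin_id.
Qed.


Notation TT R m := ('cV[R]_m * 'cV[R]_m)%type.
Notation TTm R m := (g_sigma_algebraType [set V : set (TT R m) | open V]).

Lemma cont_meas (R : realType) m (f : TT R m -> R) :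
  continuous f -> measurable_fun [set: TTm R m] (f : TTm R m -> R).
Proof.
move=> /continuousP cf.
apply: (measurability _ (measurable_realfun.RGenOpens.measurableE R)).
move=> _ [_ [a [b ->]] <-]; rewrite setTI; apply: sub_sigma_algebra.
exact/cf/interval_open.
Qed.

Lemma coord1_meas (R : realType) m i j :
  measurable_fun [set: TTm R m] ((fun p : TT R m => p.1 i j) : TTm R m -> R).
Proof.
apply: cont_meas => p.
have -> : (fun p : TT R m => p.1 i j) = (fun M : 'cV[R]_m => M i j) \o fst by [].
apply: continuous_comp; [exact: cvg_fst | exact: coord_continuous].
Qed.

Lemma coord2_meas (R : realType) m i j :
  measurable_fun [set: TTm R m] ((fun p : TT R m => p.2 i j) : TTm R m -> R).
Proof.
apply: cont_meas => p.
have -> : (fun p : TT R m => p.2 i j) = (fun M : 'cV[R]_m => M i j) \o snd by [].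
apply: continuous_comp; [exact: cvg_snd | exact: coord_continuous].
Qed.

Lemma meas_borel (R : realType) m (f : TTm R m -> R) :
  measurable_fun [set: TTm R m] f -> borel_measurable_fun (f : TT R m -> R).
Proof.
move=> mf U oU.
have := mf measurableT U (measurable_realfun.open_measurable oU). by rewrite setTI.
Qed.

Lemma meas_qv1 (R : realType) nS nA m (Phi : 'M[R]_(nA.+1 * nS, m)) s a :
  measurable_fun [set: TTm R m] ((fun p : TT R m => qv Phi p.1 s a) : TTm R m -> R).
Proof.
have -> : (fun p : TT R m => qv Phi p.1 s a)
   = (fun p : TT R m => \sum_k Phi (sa s a) k * p.1 k 0).
  by apply/funext => p; rewrite /qv mxE.
apply: meas_sum => k; apply: measurable_funM; first exact: measurable_cst.
exact: coord1_meas.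
Qed.

Lemma meas_qv2 (R : realType) nS nA m (Phi : 'M[R]_(nA.+1 * nS, m)) s a :
  measurable_fun [set: TTm R m] ((fun p : TT R m => qv Phi p.2 s a) : TTm R m -> R).
Proof.
have -> : (fun p : TT R m => qv Phi p.2 s a)
   = (fun p : TT R m => \sum_k Phi (sa s a) k * p.2 k 0).
  by apply/funext => p; rewrite /qv mxE.
apply: meas_sum => k; apply: measurable_funM; first exact: measurable_cst.
exact: coord2_meas.
Qed.

Lemma meas_Msel (R : realType) nS nA m (Phi : 'M[R]_(nA.+1 * nS, m)) s a :
  borel_measurable_fun (fun p : TT R m => Msel Phi p s a).
Proof.
apply: (@meas_borel R m (fun p : TT R m => Msel Phi p s a)).
have -> : (fun p : TT R m => Msel Phi p s a)
   = (fun p : TT R m => muf (fun i => qv Phi p.1 s i) (fun i => qv Phi p.2 s i) a).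
  by apply/funext => p; rewrite mxE.
apply: (@meas_muf _ (TTm R m) R nA (fun i (p : TTm R m) => qv Phi p.1 s i)
                                  (fun i (p : TTm R m) => qv Phi p.2 s i)).
- move=> i; exact: meas_qv1.
- move=> i; exact: meas_qv2.
Qed.

Theorem proposition4 (R : realType) (nS nA m : nat)
  (P : 'M[R]_(nA.+1 * nS, nS)) (Rw : 'cV[R]_(nA.+1 * nS))
  (gamma : R) (Phi : 'M[R]_(nA.+1 * nS, m)) (d : 'cV[R]_(nA.+1 * nS))
  (alpha eta : R) :
  row_stochastic P ->
  0 < gamma < 1 ->
  \rank Phi = m ->
  (forall i, 0 < d i 0) -> \sum_i d i 0 = 1 ->
  0 < alpha < 1 ->
  0 <= eta ->
  (* first claim *)
  (forall theta thetab : 'cV[R]_m,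
     exists mu : 'M[R]_(nS, nA.+1),
       is_policy mu /\
       Top Phi P Rw d gamma alpha eta theta - Top Phi P Rw d gamma alpha eta thetab
       = Amat Phi P d gamma alpha eta mu *m (theta - thetab))
  /\
  (* "in particular": a measurable policy selection along the iteration *)
  (exists M : 'cV[R]_m * 'cV[R]_m -> 'M[R]_(nS, nA.+1),
     (forall p, is_policy (M p)) /\
     (forall s a, borel_measurable_fun (fun p => M p s a)) /\
     forall (thstar : 'cV[R]_m) (th : nat -> 'cV[R]_m),
       Gfun Phi P Rw d gamma eta thstar = 0 ->
       (forall k, th k.+1 = Top Phi P Rw d gamma alpha eta (th k)) ->
       forall k, th k.+1 - thstar
                 = Amat Phi P d gamma alpha eta (M (th k, thstar)) *m (th k - thstar)).
Proof.
move=> _ _ _ _ _ _ _; split.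
  move=> th thb; exists (Msel Phi (th, thb)); split; first exact: Msel_policy.
  by apply: Top_diff; exact: V_diff.
exists (Msel Phi); split; first by move=> p; exact: Msel_policy.
split; first by move=> s a; exact: meas_Msel.
move=> thstar th hG hth k.
have hs : Top Phi P Rw d gamma alpha eta thstar = thstar.
  by rewrite /Top hG scaler0 addr0.
rewrite hth -{1}hs; apply: Top_diff; exact: V_diff.
Qed.
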